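(* Let $x,y>0$ and let $X=(x,y,x,y,\ldots)$ be the 2-periodic sequence. Then for all sufficiently large $k\in\mathbb{N}$, \[ S(X,2k,k)^{1/k}\ge S(X,2k+2,k+1)^{1/(k+1)}, \] and moreover \[ \lim_{k\to\infty}S(X,2k,k)^{1/k}=\left(\frac{x^{1/2}+y^{1/2}}{2}\right)^2. \]
   Context: For a sequence $X=(x_1,x_2,\ldots)$ of positive reals and integers $1\le k\le n$, $S(X,n,k):=\binom{n}{k}^{-1}\sum_{1\le i_1<\cdots<i_k\le n}x_{i_1}\cdots x_{i_k}$. *)

(* Defs.v *)
From HB Require Import structures.
From mathcomp Require Import all_boot all_order all_algebra.
From mathcomp Require Import all_classical all_reals all_analysis.
Set Implicit Arguments. Unset Strict Implicit. Unset Printing Implicit Defensive.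
Import Order.TTheory GRing.Theory Num.Theory.
Local Open Scope ring_scope.

(* S(X,n,k) = binom(n,k)^{-1} * sum over k-subsets {i_1<...<i_k} of {1..n}
   of x_{i_1}...x_{i_k}.  Indices are 0-based here: X 0 = x_1, X 1 = x_2, ... *)
Definition Smean (R : realType) (X : nat -> R) (n k : nat) : R :=
  ('C(n, k)%:R)^-1 *
  \sum_(A : {set 'I_n} | #|A| == k) \prod_(i in A) X (nat_of_ord i).

Definition alt2 (R : realType) (x y : R) : nat -> R :=
  fun i => if odd i then y else x.

(* Main.v *)
Require Import Defs.
From HB Require Import structures.
From mathcomp Require Import all_boot all_order all_algebra.
From mathcomp Require Import all_classical all_reals all_analysis.
From mathcomp Require Import ring lra zify.
Import Order.TTheory GRing.Theory Num.Theory.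
Import numFieldNormedType.Exports.
Local Open Scope classical_set_scope.
Local Open Scope ring_scope.
Lemma esym_coef (R : realType) n k (X : nat -> R) :
  \sum_(A : {set 'I_n} | #|A| == k) \prod_(i in A) X i =
  (\prod_(i < n) ((X i)%:P * 'X + 1))`_k.
Proof.
rewrite bigA_distr coef_sum big_mkcond /=.
apply: eq_bigr => J _.
rewrite -big_mkcond /= big_split /= prodr_const -rmorph_prod coefCM coefXn.
by case: eqP => [->|/eqP]; rewrite ?eqxx ?mulr1 // eq_sym => /negbTE ->; rewrite mulr0.
Qed.

Lemma prod_alt (R : realType) (x y : R) k :
  \prod_(i < 2 * k) ((alt2 x y i)%:P * 'X + 1) =
  ((x%:P * 'X + 1) * (y%:P * 'X + 1)) ^+ k.
Proof.
elim: k => [|k IH]; first by rewrite big_ord0 expr0.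
rewrite -(big_mkord xpredT (fun i => (alt2 x y i)%:P * 'X + 1)) in IH.
rewrite -(big_mkord xpredT (fun i => (alt2 x y i)%:P * 'X + 1)).
have -> : (2 * k.+1 = (2*k).+2)%N by rewrite mulnS.
rewrite big_nat_recr //= big_nat_recr //= IH exprS /alt2.
rewrite !oddM /= -mulrA mulrC.
have -> : odd (2 * k) = false by rewrite oddM.
by [].
Qed.
Lemma coef_binom (R : realType) (s : R) n j :
  ((1 + s%:P * 'X) ^+ n)`_j = 'C(n, j)%:R * s ^+ j.
Proof.
rewrite exprDn coef_sum.
transitivity (\sum_(l < n.+1 | l == j :> nat) s ^+ l *+ 'C(n, l)).
  rewrite [RHS]big_mkcond; apply: eq_bigr => l _ /=.
  rewrite expr1n mul1r exprMn -rmorphXn coefMn coefCM coefXn.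
  by case: eqP => [->|/eqP]; rewrite ?eqxx ?mulr1 // eq_sym => /negbTE ->; rewrite mulr0 mul0rn.
rewrite (big_ord1_eq _ (fun l => s ^+ l *+ 'C(n, l))).
case: ltnP => H; first by rewrite mulr_natl.
by rewrite bin_small ?mul0r.
Qed.

Lemma coef_main (R : realType) (c s : R) k :
  ((c%:P * 'X + (1 + s%:P * 'X) ^+ 2) ^+ k)`_k =
  \sum_(i < k.+1) 'C(k, i)%:R * c ^+ (k - i) * (s ^+ i * 'C(2 * i, i)%:R).
Proof.
rewrite exprDn coef_sum; apply: eq_bigr => i _.
rewrite coefMn exprMn -rmorphXn -exprM -mulrA coefCM coefXnM.
have hi : (i <= k)%N by rewrite -ltnS.
rewrite ltnNge leq_subr /= subKn // coef_binom mulnC.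
by rewrite -mulr_natl; ring.
Qed.

Lemma poly_id (R : realType) (x y c s : R) :
  c = x + y - 2 * s -> s * s = x * y ->
  (x%:P * 'X + 1) * (y%:P * 'X + 1) = c%:P * 'X + (1 + s%:P * 'X) ^+ 2.
Proof.
move=> hc hs; apply/eqP; rewrite -subr_eq0.
have -> : (x%:P * 'X + 1) * (y%:P * 'X + 1) - (c%:P * 'X + (1 + s%:P * 'X) ^+ 2)
   = (x%:P * y%:P - s%:P * s%:P) * 'X ^+ 2 - (c%:P - (x%:P + y%:P - 2 * s%:P)) * 'X.
  ring.
have -> : x%:P * y%:P = s%:P * s%:P :> {poly R} by rewrite -!polyCM hs.
have -> : c%:P = x%:P + y%:P - 2 * s%:P :> {poly R}.
  by rewrite hc rmorphB rmorphD rmorphM /= rmorph_nat.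
by rewrite !subrr mul0r mul0r subrr.
Qed.
Lemma binC2 i : (i.+1 * 'C((2 * i).+2, i.+1) = 2 * (2 * i).+1 * 'C(2 * i, i))%N.
Proof.
have h1 := mul_bin_diag (2 * i).+2 i.
have h2 := mul_bin_down (2 * i).+1 i.
simpl in h1, h2.
have e : ((2 * i).+1 - i = i.+1)%N by lia.
rewrite e in h2.
apply/eqP; rewrite -(eqn_pmul2l (ltn0Sn i)); apply/eqP.
rewrite mulnA (mulnC i.+1) -mulnA -h1.
nia.
Qed.

Definition gg (R : realType) (i : nat) : R := 'C(2 * i, i)%:R / 4 ^+ i.

Lemma gg_gt0 (R : realType) i : 0 < gg R i.
Proof. by rewrite /gg divr_gt0 ?exprn_gt0 // ltr0n bin_gt0 leq_pmull. Qed.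

Lemma gg0 (R : realType) : gg R 0 = 1.
Proof. by rewrite /gg expr0 divr1. Qed.

Lemma gg_rec (R : realType) i :
  gg R i.+1 = gg R i * ((2 * i).+1)%:R / ((2 * i).+2)%:R.
Proof.
rewrite /gg.
have -> : (2 * i.+1 = (2 * i).+2)%N by rewrite mulnS.
have h : ((2 * i).+2 * 'C((2 * i).+2, i.+1) = 2 * 2 * (2 * i).+1 * 'C(2 * i, i))%N.
  by have := binC2 i; nia.
have hC : ('C((2 * i).+2, i.+1)%:R : R) =
   (2 * 2 * (2 * i).+1 * 'C(2 * i, i))%:R / ((2 * i).+2)%:R.
  by rewrite -h natrM [X in X / _]mulrC mulfK // pnatr_eq0.
rewrite hC !natrM exprS.
field.
apply/andP; split; last by rewrite expf_neq0.
have hi : (0:R) <= i%:R by rewrite ler0n.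
rewrite gt_eqF //; lra.
Qed.

Lemma gg_step (R : realType) i : gg R i.+1 <= gg R i.
Proof.
rewrite gg_rec -mulrA ger_pMr ?gg_gt0 //.
by rewrite ler_pdivrMr ?ltr0n // mul1r ler_nat.

Qed.

Lemma gg_dec (R : realType) i j : (i <= j)%N -> gg R j <= gg R i.
Proof.
move=> /subnK <-; elim: (j - i)%N => [|n IH] //.
by rewrite addSn; apply: le_trans (gg_step _ _) IH.
Qed.

Lemma gg_le1 (R : realType) i : gg R i <= 1.
Proof. by rewrite -(gg0 R) gg_dec. Qed.

Lemma gg_lb (R : realType) i : ((2 * i).+1%:R)^-1 <= gg R i.
Proof.
elim: i => [|i IH]; first by rewrite gg0 invr1.
rewrite gg_rec.
have hi : (0:R) <= i%:R by rewrite ler0n.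
have -> : (2 * i.+1).+1 = (2 * i).+3 by rewrite mulnS.
rewrite -mulrA.
apply: le_trans (_ : ((2 * i).+1%:R)^-1 * ((2 * i).+1%:R / (2 * i).+2%:R) <= _).
  rewrite mulrA mulVf ?pnatr_eq0 // mul1r lef_pV2 ?posrE ?ltr0n // ler_nat //.
by rewrite ler_wpM2r // divr_ge0.
Qed.

Definition vv (R : realType) (c s : R) k i : R := 'C(k, i)%:R * c ^+ (k - i) * (4 * s) ^+ i.
Arguments vv {R}.
Definition TT (R : realType) (c s : R) k : R := \sum_(i < k.+1) vv c s k i * gg R i.
Arguments TT {R}.

Lemma sum_vv (R : realType) (c s : R) k : \sum_(i < k.+1) vv c s k i = (c + 4 * s) ^+ k.
Proof.
rewrite exprDn; apply: eq_bigr => i _.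
by rewrite /vv mulr_natl mulrnAl.
Qed.

Lemma vv_ge0 (R : realType) (c s : R) k i : 0 <= c -> 0 <= s -> 0 <= vv c s k i.
Proof.
move=> c0 s0; rewrite /vv; apply: mulr_ge0; first apply: mulr_ge0.
- exact: ler0n.
- exact: exprn_ge0.
- by apply: exprn_ge0; rewrite mulr_ge0.
Qed.

Lemma sum_vv_div (R : realType) (c s : R) k :
  (k.+1)%:R * (4 * s) * \sum_(i < k.+1) vv c s k i / (i.+1)%:R
    = (c + 4 * s) ^+ k.+1 - c ^+ k.+1.
Proof.
rewrite exprDn [in RHS]big_ord_recl /= subn0 expr0 mulr1 bin0 mulr1n addrC addKr.
rewrite mulr_sumr; apply: eq_bigr => i _.
rewrite /vv /bump /= add1n subSS.
have h := mul_bin_diag k.+1 i; simpl in h.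
have hr : (k.+1%:R : R) * 'C(k, i)%:R = (i.+1)%:R * 'C(k.+1, i.+1)%:R by rewrite -!natrM h.
rewrite -mulr_natr exprS.
have hi : (i.+1%:R : R) != 0 by rewrite pnatr_eq0.
apply: (mulfI hi).
transitivity ((k.+1%:R * 'C(k, i)%:R) * (4 * s) * (c ^+ (k - i) * (4 * s) ^+ i)).
  by field.
by rewrite hr; ring.
Qed.

Lemma TT_rec (R : realType) (c s : R) k :
  TT c s k.+1 = c * TT c s k + 4 * s * \sum_(i < k.+1) vv c s k i * gg R i.+1.
Proof.
rewrite /TT big_ord_recl [in c * _]big_ord_recl /=.
have e0 : vv c s k.+1 0 * gg R 0 = c * (vv c s k 0 * gg R 0).
  by rewrite /vv !bin0 !subn0 !expr0 exprS; ring.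
rewrite e0 mulrDr -addrA; congr (_ + _).
have e1 : forall i : 'I_k.+1, vv c s k.+1 (bump 0 i) * gg R (bump 0 i) =
   'C(k, i.+1)%:R * c ^+ (k - i) * (4 * s) ^+ i.+1 * gg R i.+1
   + 4 * s * (vv c s k i * gg R i.+1).
  move=> i; rewrite /vv /bump /= add1n subSS binS natrD exprS; ring.
rewrite (eq_bigr _ (fun i _ => e1 i)) big_split /=; congr (_ + _); last by rewrite mulr_sumr.
rewrite big_ord_recr /= bin_small // mul0r !mul0r addr0 mulr_sumr.
apply: eq_bigr => i _.
rewrite /vv /bump /= add1n.
have hi : (i < k)%N := ltn_ord i.
have -> : (k - i = (k - i.+1).+1)%N by lia.
rewrite exprS; ring.
Qed.
Lemma cheb (R : realType) n (w f g : nat -> R) :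
  (forall i, 0 <= w i) ->
  (forall i j, (i <= j)%N -> f j <= f i) ->
  (forall i j, (i <= j)%N -> g j <= g i) ->
  (\sum_(i < n) w i * f i) * (\sum_(i < n) w i * g i) <=
  (\sum_(i < n) w i) * (\sum_(i < n) w i * f i * g i).
Proof.
move=> w0 fd gd.
have E : forall i j : 'I_n, w i * w j * ((f i - f j) * (g i - g j)) =
   (w i * f i * g i * w j + w j * f j * g j * w i)
   - (w i * f i * (w j * g j) + w j * f j * (w i * g i)).
  by move=> i j; ring.
have key : 0 <= \sum_(i < n) \sum_(j < n) ((w i * f i * g i * w j + w j * f j * g j * w i)
   - (w i * f i * (w j * g j) + w j * f j * (w i * g i))).
  apply: sumr_ge0 => i _; apply: sumr_ge0 => j _.
  rewrite -E.
  apply: mulr_ge0; first exact: mulr_ge0.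
  case: (leqP i j) => hij.
    by apply: mulr_ge0; rewrite subr_ge0 ?fd ?gd.
  by apply: mulr_le0; rewrite subr_le0 ?fd ?gd // ltnW.
set A := \sum_(i < n) w i; set B := \sum_(i < n) w i * f i; set C := \sum_(i < n) w i * g i.
set D := \sum_(i < n) w i * f i * g i.
have e1 : \sum_(i < n) \sum_(j < n) w i * f i * g i * w j = D * A.
  by rewrite /D mulr_suml; apply: eq_bigr => i _; rewrite mulr_sumr.
have e2 : \sum_(i < n) \sum_(j < n) w i * f i * (w j * g j) = B * C.
  by rewrite /B mulr_suml; apply: eq_bigr => i _; rewrite mulr_sumr.
have e3 : \sum_(i < n) \sum_(j < n) w j * f j * g j * w i = D * A.
  by rewrite exchange_big /= e1.
have e4 : \sum_(i < n) \sum_(j < n) w j * f j * (w i * g i) = B * C.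
  by rewrite exchange_big /= e2.
have R1 : \sum_(i < n) \sum_(j < n) ((w i * f i * g i * w j + w j * f j * g j * w i)
   - (w i * f i * (w j * g j) + w j * f j * (w i * g i))) = 2 * (A * D - B * C).
  rewrite (eq_bigr (fun i : 'I_n => (\sum_(j < n) w i * f i * g i * w j + \sum_(j < n) w j * f j * g j * w i)
     - (\sum_(j < n) w i * f i * (w j * g j) + \sum_(j < n) w j * f j * (w i * g i)))); last first.
    by move=> i _; rewrite sumrB !big_split.
  rewrite sumrB !big_split /= e1 e2 e3 e4; ring.
rewrite R1 in key.
rewrite -subr_ge0.
by move: key; rewrite pmulr_rge0.
Qed.

Lemma gg_rec' (R : realType) i : gg R i.+1 = gg R i - gg R i / (2 * i.+1%:R).
Proof.
rewrite gg_rec -!natr1 natrM -natr1.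
have hi : (0:R) <= i%:R by rewrite ler0n.
field.
rewrite !gt_eqF //; lra.
Qed.

Lemma TT_step (R : realType) (c s : R) k : 0 <= c -> 0 < s ->
  TT c s k.+1 * (2 * k%:R + 2) * (c + 4 * s) ^+ k <=
  TT c s k * ((c + 4 * s) * (2 * k%:R + 1) * (c + 4 * s) ^+ k + c ^+ k.+1).
Proof.
move=> c0 s0.
set Q := c + 4 * s; set Qk := Q ^+ k; set C := c ^+ k.+1.
set T := TT c s k.
set B := \sum_(i < k.+1) vv c s k i * gg R i * (i.+1%:R)^-1.
set X := \sum_(i < k.+1) vv c s k i / (i.+1%:R).
have hT : TT c s k.+1 = Q * T - 2 * s * B.
  rewrite TT_rec.
  have -> : \sum_(i < k.+1) vv c s k i * gg R i.+1 = T - B / 2.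
    rewrite /T /TT /B mulr_suml -sumrB; apply: eq_bigr => i _.
    rewrite gg_rec'; field. have := ler0n R i; rewrite gt_eqF //; lra.
  by rewrite /T /Q; field.
have hX : k.+1%:R * (4 * s) * X = Q * Qk - C.
  by rewrite /X sum_vv_div /Q /Qk /C exprS.
have hcheb : T * X <= Qk * B.
  have := @cheb R k.+1 (vv c s k) (gg R) (fun i => (i.+1%:R)^-1)
    (fun i => @vv_ge0 R c s k i c0 (ltW s0)) (fun i j h => @gg_dec R i j h).
  have hd : forall i j, (i <= j)%N -> (j.+1%:R : R)^-1 <= (i.+1%:R)^-1.
    by move=> i j h; rewrite lef_pV2 ?posrE ?ltr0n // ler_nat.
  move=> /(_ hd).
  rewrite /T /TT /X /B /Qk /Q sum_vv.
  by [].
have h1 : (2 * s * (2 * k%:R + 2)) * (T * X) <= (2 * s * (2 * k%:R + 2)) * (Qk * B).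
  apply: ler_wpM2l => //.
  have hk : (0:R) <= k%:R by rewrite ler0n.
  apply: mulr_ge0; [apply: mulr_ge0 => //; exact: ltW | lra].
have h2 : (2 * s * (2 * k%:R + 2)) * (T * X) = T * (Q * Qk - C).
  rewrite -hX -natr1; ring.
rewrite hT.
rewrite h2 in h1.
have -> : (Q * T - 2 * s * B) * (2 * k%:R + 2) * Qk =
   Q * T * (2 * k%:R + 2) * Qk - 2 * s * (2 * k%:R + 2) * (Qk * B) by ring.
rewrite lerBlDr -subr_ge0. rewrite -subr_ge0 in h1.
have -> : T * (Q * (2 * k%:R + 1) * Qk + C) + 2 * s * (2 * k%:R + 2) * (Qk * B) -
   Q * T * (2 * k%:R + 2) * Qk = 2 * s * (2 * k%:R + 2) * (Qk * B) - T * (Q * Qk - C) by ring.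
exact: h1.
Qed.

Definition hh (R : realType) (c s : R) k := TT c s k / ((c + 4 * s) ^+ k * gg R k).
Arguments hh {R}.

Lemma TT_ge0 (R : realType) (c s : R) k : 0 <= c -> 0 < s -> 0 <= TT c s k.
Proof.
move=> c0 s0; apply: sumr_ge0 => i _; apply: mulr_ge0; first exact: vv_ge0 (ltW s0).
exact: ltW (gg_gt0 _ _).
Qed.

Lemma TT_le (R : realType) (c s : R) k : 0 <= c -> 0 < s -> TT c s k <= (c + 4 * s) ^+ k.
Proof.
move=> c0 s0; rewrite -sum_vv; apply: ler_sum => i _.
by rewrite ler_piMr ?gg_le1 // vv_ge0 // ltW.
Qed.

Lemma hh_step (R : realType) (c s : R) k : 0 <= c -> 0 < s ->
  hh c s k.+1 <= hh c s k * (1 + (c / (c + 4 * s)) ^+ k.+1 / (2 * k%:R + 1)).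
Proof.
move=> c0 s0.
have hQ : 0 < c + 4 * s by lra.
have hk : (0:R) <= k%:R by rewrite ler0n.
have := @TT_step R c s k c0 s0.
rewrite /hh gg_rec exprS.
set Q := c + 4 * s; set Qk := Q ^+ k; set G := gg R k.
have hQk : 0 < Qk by rewrite exprn_gt0.
have hG : 0 < G by rewrite gg_gt0.
have e1 : ((2 * k).+1%:R : R) = 2 * k%:R + 1 by rewrite -natr1 natrM.
have e2 : ((2 * k).+2%:R : R) = 2 * k%:R + 2 by rewrite -!natr1 natrM; ring.
rewrite e1 e2 expr_div_n exprS -/Q -/Qk.
move=> H.
set D := Q * Qk * G * (2 * k%:R + 1).
have hD : 0 < D by rewrite /D; apply: mulr_gt0; [apply: mulr_gt0; [exact: mulr_gt0|done]| lra].
have -> : TT c s k.+1 / (Q * Qk * (G * (2 * k%:R + 1) / (2 * k%:R + 2))) =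
   TT c s k.+1 * (2 * k%:R + 2) * Qk / (D * Qk).
  rewrite /D; field; repeat (apply/andP; split); rewrite gt_eqF //; lra.
have -> : TT c s k / (Qk * G) * (1 + c ^+ k.+1 / (Q * Qk) / (2 * k%:R + 1)) =
   TT c s k * (Q * (2 * k%:R + 1) * Qk + c ^+ k.+1) / (D * Qk).
  rewrite /D; field; repeat (apply/andP; split); rewrite gt_eqF //; lra.
apply: ler_wpM2r; first by rewrite invr_ge0 ltW // mulr_gt0.
by rewrite exprS.
Qed.

Lemma hh_lb (R : realType) (c s : R) j : 0 <= c -> 0 < s ->
  1 + c / (c + 4 * s) / (2 * j.+1%:R + 1) <= hh c s j.+1.
Proof.
move=> c0 s0.
have hQ : 0 < c + 4 * s by lra.
have hn : (0:R) <= j%:R by rewrite ler0n.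
set Q := c + 4 * s; set Qj := Q ^+ j; set Sj := (4 * s) ^+ j.
set g := gg R j.
have hg : 0 < g by rewrite gg_gt0.
have hQj : 0 < Qj by rewrite exprn_gt0.
have hSj : 0 <= Sj by rewrite exprn_ge0 // mulr_ge0 // ltW.
have hSQ : Sj <= Qj.
  by apply: lerXn2r; rewrite ?nnegrE /Q; lra.
have hL : g * (Q * Qj - 4 * s * Sj) + 4 * s * Sj * gg R j.+1 <= TT c s j.+1.
  rewrite /TT big_ord_recr /=.
  have -> : vv c s j.+1 j.+1 = 4 * s * Sj by rewrite /vv /Sj binn subnn expr0 exprS; ring.
  apply: lerD => //.
  have hs : \sum_(i < j.+1) vv c s j.+1 i = Q * Qj - 4 * s * Sj.
    have := @sum_vv R c s j.+1; rewrite big_ord_recr /=.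
    have -> : vv c s j.+1 j.+1 = 4 * s * Sj by rewrite /vv /Sj binn subnn expr0 exprS; ring.
    by rewrite -/Q exprS -/Qj => <-; rewrite addrK.
  rewrite -hs mulr_sumr; apply: ler_sum => i _.
  rewrite mulrC; apply: ler_wpM2l; first exact: vv_ge0 (ltW s0).
  by apply: gg_dec; rewrite -ltnS.
rewrite /hh -/Q exprS -/Qj gg_rec -/g.
rewrite ler_pdivlMr; last first.
  apply: mulr_gt0; first exact: mulr_gt0.
  by apply: mulr_gt0; [apply: mulr_gt0 => //; rewrite ltr0n | rewrite invr_gt0 ltr0n].
apply: (le_trans _ hL).
have e1 : ((2 * j).+1%:R : R) = 2 * j%:R + 1 by rewrite -natr1 natrM.
have e2 : ((2 * j).+2%:R : R) = 2 * j%:R + 2 by rewrite -!natr1 natrM; ring.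
have e3 : (j.+1%:R : R) = j%:R + 1 by rewrite -natr1.
rewrite gg_rec -/g e1 e2 e3 -subr_ge0.
have -> : g * (Q * Qj - 4 * s * Sj) + 4 * s * Sj * (g * (2 * j%:R + 1) / (2 * j%:R + 2)) -
   (1 + c / Q / (2 * (j%:R + 1) + 1)) * (Q * Qj * (g * (2 * j%:R + 1) / (2 * j%:R + 2))) =
   g / (2 * j%:R + 2) * (4 * s * (Qj - Sj) + 2 * c * Qj / (2 * j%:R + 3)).
  rewrite /Q; field; repeat (apply/andP; split); rewrite gt_eqF //; lra.
apply: mulr_ge0; first by apply: divr_ge0; [exact: ltW | lra].
apply: addr_ge0; first by apply: mulr_ge0; [lra | rewrite subr_ge0].
apply: divr_ge0; last lra.
by apply: mulr_ge0; [lra | exact: ltW].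
Qed.
Lemma pow_root (R : realType) (a : R) k : 0 <= a -> (0 < k)%N -> (powR a (k%:R^-1)) ^+ k = a.
Proof.
move=> a0 k0; rewrite -powR_mulrn ?powR_ge0 // -powRrM mulVf ?powRr1 //.
by rewrite pnatr_eq0 -lt0n.
Qed.

Lemma root_pow (R : realType) (b : R) k : 0 <= b -> (0 < k)%N -> powR (b ^+ k) (k%:R^-1) = b.
Proof.
move=> b0 k0; rewrite -powR_mulrn // -powRrM mulfV ?powRr1 //.
by rewrite pnatr_eq0 -lt0n.
Qed.

Lemma bern_up (R : realType) (u : R) n : 0 <= u -> 2 * n%:R * u <= 1 ->
  (1 + u) ^+ n <= 1 + 2 * n%:R * u.
Proof.
move=> u0; elim: n => [|n IH] h; first by rewrite expr0 mulr0 mul0r addr0.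
have hn : (0:R) <= n%:R by rewrite ler0n.
have h' : 2 * n%:R * u <= 1 by move: h; rewrite -natr1; nra.
rewrite exprS.
apply: le_trans (_ : (1 + u) * (1 + 2 * n%:R * u) <= _).
  by apply: ler_wpM2l; [lra | exact: IH].
move: h; rewrite -natr1; nra.
Qed.

Lemma bern_low (R : realType) (x : R) n : 0 <= x -> 1 + n%:R * x <= (1 + x) ^+ n.
Proof.
move=> x0; elim: n => [|n IH]; first by rewrite expr0 mul0r addr0.
have hn : (0:R) <= n%:R by rewrite ler0n.
rewrite exprS -natr1.
apply: le_trans (_ : (1 + x) * (1 + n%:R * x) <= _); first nra.
by apply: ler_wpM2l; [lra | exact: IH].
Qed.

Lemma bern2 (R : realType) (x : R) n : 0 <= x ->
  1 + n%:R * x + n%:R * (n%:R - 1) / 2 * x ^+ 2 <= (1 + x) ^+ n.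
Proof.
move=> x0; elim: n => [|n IH]; first by rewrite expr0 !mul0r !addr0.
have hn : (0:R) <= n%:R by rewrite ler0n.
rewrite exprS -natr1.
apply: le_trans (_ : (1 + x) * (1 + n%:R * x + n%:R * (n%:R - 1) / 2 * x ^+ 2) <= _).
  have h3 : 0 <= n%:R * n%:R * x ^+ 3 by rewrite !mulr_ge0 // exprn_ge0.
  have -> : (1 + x) * (1 + n%:R * x + n%:R * (n%:R - 1) / 2 * x ^+ 2) =
     1 + (n%:R + 1) * x + (n%:R + 1) * (n%:R + 1 - 1) / 2 * x ^+ 2
      + (n%:R * n%:R * x ^+ 3 - n%:R * x ^+ 3) / 2 by field.
  case: n IH hn h3 => [|m] IH hn h3.
    by rewrite !mul0r subrr mul0r addr0.
  rewrite lerDl; apply: divr_ge0 => //.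
  rewrite subr_ge0; apply: ler_wpM2r; first by rewrite exprn_ge0.
  by rewrite ler_peMr // ler1n.
by rewrite [(1 + x) ^+ n.+1]exprS; apply: ler_wpM2l; [lra | exact: IH].
Qed.

Lemma kpk (R : realType) (p : R) : 0 <= p -> p < 1 ->
  exists K : nat, forall k, (K <= k)%N -> 2 * k%:R * p ^+ k <= 1.
Proof.
move=> p0 p1.
have [->|pn0] := eqVneq p 0.
  exists 1%N => k hk; rewrite expr0n; case: k hk => // k _ /=; rewrite mulr0; lra.
have pp : 0 < p by rewrite lt_def pn0.
set h := p^-1 - 1.
have hp : 0 < h by rewrite /h subr_gt0 invf_gt1.
have e : p^-1 = 1 + h by rewrite /h; ring.
set B := 4 / h ^+ 2.
have hB : 0 <= B by rewrite /B divr_ge0 // exprn_ge0 // ltW.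
exists (Num.Def.archi_bound B).+2 => k hk.
have hBk : B + 1 < k%:R.
  have := archi_boundP hB.
  have : ((Num.Def.archi_bound B).+2%:R : R) <= k%:R by rewrite ler_nat.
  rewrite -!natr1; lra.
have hpk : 0 < p ^+ k by rewrite exprn_gt0.
have hk0 : (0:R) <= k%:R by rewrite ler0n.
have := @bern2 R h k (ltW hp).
rewrite -e exprVn.
move=> H.
have H2 : k%:R * (k%:R - 1) / 2 * h ^+ 2 <= (p ^+ k)^-1.
  apply: (le_trans _ H); rewrite -subr_ge0 addrK.
  have := mulr_ge0 hk0 (ltW hp); lra.
rewrite -(@ler_pM2r _ ((p ^+ k)^-1)) ?invr_gt0 // mul1r mulfK ?gt_eqF //.
apply: (le_trans _ H2).
have h2 : 0 < h ^+ 2 by rewrite exprn_gt0.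
have hB' : B * h ^+ 2 = 4 by rewrite /B mulfVK // gt_eqF.
have : 4 <= (k%:R - 1) * h ^+ 2.
  rewrite -hB'; apply: ler_wpM2r; [exact: ltW | lra].
nra.
Qed.

Lemma endgame (R : realType) (M p : R) (a h : nat -> R) :
  0 < M -> 0 <= p -> p < 1 ->
  (forall k, 0 < h k) -> (forall k, a k = M ^+ k * h k) ->
  h 0%N = 1 ->
  (forall k, h k.+1 <= h k * (1 + p ^+ k.+1 / (2 * k%:R + 1))) ->
  (forall j, 1 + p / (2 * j.+1%:R + 1) <= h j.+1) ->
  (forall k, h k <= 2 * k%:R + 1) ->
  (exists K : nat, forall k : nat, (K <= k)%N ->
     powR (a k.+1) (k.+1%:R)^-1 <= powR (a k) (k%:R)^-1)
  /\ ((fun k => powR (a k) (k%:R)^-1) @ \oo --> M).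
Proof.
move=> M0 p0 p1 h0 ha h00 hstep hlb hub.
have hge1 : forall k, (0 < k)%N -> 1 <= h k.
  case=> [//|j] _; apply: le_trans (hlb j); rewrite lerDl; apply: divr_ge0 => //.
have a0 : forall k, 0 <= a k by move=> k; rewrite ha mulr_ge0 ?exprn_ge0 // ltW.
split.
  have [K HK] := @kpk R p p0 p1.
  exists (maxn K 1) => k; rewrite geq_max => /andP[hK hk1].
  case: k hK hk1 => [//|j] hK _.
  have hkn : (0:R) <= j.+1%:R by rewrite ler0n.
  set u := p ^+ j.+2 / (2 * j.+1%:R + 1).
  have hu0 : 0 <= u by rewrite /u divr_ge0 ?exprn_ge0 //; lra.
  have hpk := HK j.+1 hK.
  have hpk0 : 0 <= p ^+ j.+1 by rewrite exprn_ge0.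
  have h2u : 2 * j.+1%:R * u <= p / (2 * j.+1%:R + 1).
    rewrite /u mulrA ler_pM2r ?invr_gt0; last lra.
    rewrite exprS; nra.
  have hp2 : p / (2 * j.+1%:R + 1) <= 1.
    rewrite ler_pdivrMr; last lra.
    have : (1:R) <= j.+1%:R by rewrite ler1n.
    lra.
  have hb := @bern_up R u j.+1 hu0 (le_trans h2u hp2).
  have hhj : h j.+2 ^+ j.+1 <= h j.+1 ^+ j.+2.
    apply: le_trans (_ : (h j.+1 * (1 + u)) ^+ j.+1 <= _).
      apply: lerXn2r; rewrite ?nnegrE.
      - exact: ltW.
      - by apply: mulr_ge0; [exact: ltW| lra].
      - exact: hstep.
    rewrite exprMn [X in _ <= X]exprS mulrC.
    apply: ler_wpM2r; first by rewrite exprn_ge0 ?ltW.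
    apply: le_trans hb _; apply: le_trans (hlb j).
    by rewrite lerD2l.
  have haj : a j.+2 ^+ j.+1 <= a j.+1 ^+ j.+2.
    have eM : (M ^+ j.+2) ^+ j.+1 = (M ^+ j.+1) ^+ j.+2 by rewrite -!exprM mulnC.
    rewrite (ha j.+2) (ha j.+1) exprMn [X in _ <= X]exprMn eM.
    by apply: ler_wpM2l => //; rewrite !exprn_ge0 // ltW.
  set N := (j.+2 * j.+1)%N.
  have hN : (0 < N)%N by [].
  rewrite -(ler_pXn2r hN) ?nnegrE ?powR_ge0 //.
  rewrite /N exprM pow_root // (mulnC j.+2) exprM pow_root //.
set H := (1 - p)^-1.
have hinv : forall k, h k <= (1 - p ^+ k.+1) / (1 - p).
  elim=> [|k IH]; first by rewrite h00 expr1 divff // subr_eq0 gt_eqF.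
  have hk : (0:R) <= k%:R by rewrite ler0n.
  apply: le_trans (hstep k) _.
  apply: le_trans (_ : h k + p ^+ k.+1 <= _).
    rewrite mulrDr mulr1 lerD2l.
    rewrite mulrA ler_pdivrMr; last lra.
    rewrite mulrC ler_wpM2l ?exprn_ge0 //.
  apply: le_trans (_ : (1 - p ^+ k.+1) / (1 - p) + p ^+ k.+1 <= _).
    by rewrite lerD2r.
  rewrite [p ^+ k.+2]exprS.
  have hp : 0 < 1 - p by lra.
  rewrite le_eqVlt; apply/orP; left; apply/eqP; field.
  by rewrite gt_eqF.
have hH : forall k, h k <= H.
  move=> k; apply: le_trans (hinv k) _.
  rewrite /H ler_pdivrMr; last lra.
  rewrite mulVf; last by rewrite subr_eq0 gt_eqF.
  by rewrite lerBlDr lerDl exprn_ge0.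
have H1 : 1 <= H by apply: le_trans (hH 0%N); rewrite h00.
apply: (@squeeze_cvgr _ _ _ _ (fun=> M) (fun k => M + (2 * M * (H - 1)) * harmonic k)).
- near=> k.
  have hk : (0 < k)%N by near: k; exact: nbhs_infty_gt.
  have hkn : (1:R) <= k%:R by rewrite ler1n.
  rewrite ha powRM; [|by rewrite exprn_ge0 // ltW|exact: ltW].
  rewrite root_pow; [|exact: ltW|done].
  apply/andP; split.
    rewrite ler_peMr //; first exact: ltW.
    apply: le_trans (_ : powR 1 (k%:R^-1) <= _); first by rewrite powR1.
    apply: ge0_ler_powR; rewrite ?invr_ge0 ?nnegrE ?ler0n //; first exact: ltW.
    exact: hge1.
  rewrite /harmonic /=.
  have -> : M + 2 * M * (H - 1) / k.+1%:R = M * (1 + 2 * (H - 1) / k.+1%:R) by ring.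
  rewrite ler_pM2l //.
  have hmid : powR (h k) (k%:R^-1) <= 1 + (H - 1) / k%:R.
    rewrite -[X in _ <= X](@root_pow R _ k) //; last first.
      by apply: addr_ge0 => //; rewrite divr_ge0 ?ler0n //; lra.
    apply: ge0_ler_powR.
    - by rewrite invr_ge0 ler0n.
    - by rewrite nnegrE ltW.
    - by rewrite nnegrE exprn_ge0 // addr_ge0 // divr_ge0 ?ler0n //; lra.
    apply: le_trans (hH k) _.
    apply: le_trans (@bern_low R _ k _); last by rewrite divr_ge0 ?ler0n //; lra.
    rewrite mulrC divfK ?gt_eqF //; last lra.
    lra.
  apply: (le_trans hmid).
  rewrite lerD2l -natr1 ler_pdivrMr; last lra.
  rewrite mulrAC ler_pdivlMr; last lra.
  nra.
- exact: cvg_cst.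
- rewrite -[X in _ --> X]addr0.
  apply: cvgD; first exact: cvg_cst.
  rewrite -(mulr0 (2 * M * (H - 1))).
  apply: cvgM; [exact: cvg_cst | exact: cvg_harmonic].
Unshelve. all: end_near.
Qed.

Lemma Smean_TT (R : realType) (x y c s : R) k :
  c = x + y - 2 * s -> s * s = x * y ->
  Smean (alt2 x y) (2 * k) k = TT c s k / 'C(2 * k, k)%:R.
Proof.
move=> hc hs.
rewrite /Smean esym_coef prod_alt (@poly_id R x y c s hc hs) coef_main mulrC /TT.
congr (_ * _); apply: eq_bigr => i _.
rewrite /vv /gg exprMn.
have h4 : (4 : R) ^+ i != 0 by rewrite expf_neq0.
field.
by [].
Qed.

Theorem lemma4p1 (R : realType) (x y : R) (hx : 0 < x) (hy : 0 < y) :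
  (exists K : nat, forall k : nat, (K <= k)%N ->
     powR (Smean (alt2 x y) (2 * k.+1) k.+1) (k.+1%:R)^-1
       <= powR (Smean (alt2 x y) (2 * k) k) (k%:R)^-1)
  /\
  ((fun k : nat => powR (Smean (alt2 x y) (2 * k) k) (k%:R)^-1) @ \oo
     --> ((Num.sqrt x + Num.sqrt y) / 2) ^+ 2).
Proof.
set a := Num.sqrt x; set b := Num.sqrt y.
have ha : 0 < a by rewrite /a sqrtr_gt0.
have hb : 0 < b by rewrite /b sqrtr_gt0.
have hxa : x = a ^+ 2 by rewrite /a sqr_sqrtr // ltW.
have hyb : y = b ^+ 2 by rewrite /b sqr_sqrtr // ltW.
set s := a * b; set c := x + y - 2 * s.
have hs0 : 0 < s by rewrite /s mulr_gt0.
have hc0 : 0 <= c by rewrite /c /s hxa hyb; have := sqr_ge0 (a - b); lra.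
have hss : s * s = x * y by rewrite /s hxa hyb; ring.
have hQ : 0 < c + 4 * s by lra.
set M := (c + 4 * s) / 4.
have hM : ((a + b) / 2) ^+ 2 = M by rewrite /M /c /s hxa hyb; field.
rewrite hM.
apply: (@endgame R M (c / (c + 4 * s)) (fun k => Smean (alt2 x y) (2 * k) k) (hh c s)).
- by rewrite /M divr_gt0.
- by rewrite divr_ge0 // ltW.
- by rewrite ltr_pdivrMr // mul1r; lra.
- case=> [|j].
    by rewrite /hh /TT big_ord1 /vv bin0 !expr0 gg0 !mulr1 divr1 ltr01.
  apply: (lt_le_trans _ (@hh_lb R c s j hc0 hs0)).
  have : 0 <= c / (c + 4 * s) / (2 * j.+1%:R + 1).
    by apply: divr_ge0; [rewrite divr_ge0 // ltW | have := ler0n R j.+1; lra].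
  lra.
- move=> k; rewrite (@Smean_TT R x y c s k (erefl c) hss) /hh /M.
  have hg := gg_gt0 R k.
  have eC : ('C(2 * k, k)%:R : R) = gg R k * 4 ^+ k by rewrite /gg divfK // expf_neq0.
  rewrite eC expr_div_n.
  field.
  by rewrite !gt_eqF // ?exprn_gt0.
- by rewrite /hh /TT big_ord1 /vv bin0 !expr0 gg0 !mulr1 divr1.
- by move=> k; apply: hh_step.
- by move=> j; apply: hh_lb.
- move=> k; rewrite /hh.
  have hg := gg_gt0 R k.
  have hQk : 0 < (c + 4 * s) ^+ k by rewrite exprn_gt0.
  rewrite ler_pdivrMr ?mulr_gt0 //.
  apply: (le_trans (@TT_le R c s k hc0 hs0)).
  have hg1 : 1 <= (2 * k%:R + 1) * gg R k.
    have := gg_lb R k.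
    have e1 : ((2 * k).+1%:R : R) = 2 * k%:R + 1 by rewrite -natr1 natrM.
    rewrite e1 -(@ler_pM2l _ (2 * k%:R + 1)); last by have := ler0n R k; lra.
    rewrite mulfV //; have := ler0n R k; rewrite gt_eqF //; lra.
  rewrite -subr_ge0.
  have -> : (2 * k%:R + 1) * ((c + 4 * s) ^+ k * gg R k) - (c + 4 * s) ^+ k =
    (c + 4 * s) ^+ k * ((2 * k%:R + 1) * gg R k - 1) by ring.
  by apply: mulr_ge0; [exact: ltW | rewrite subr_ge0].
all: by rewrite ltr0n bin_gt0 leq_pmull.
Qed.
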